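(* For a graph $G$, $\gamma_{(2,2,2)}(G)=4$ if and only if at least one of the following holds: (i) $\gamma_{\times2,t}(G)=4$; (ii) $\gamma_t(G)=2$ and $G$ has minimum degree $\delta=1$; (iii) $\gamma_t(G)=2$ and $\gamma_{\times2,t}(G)\ge4$.
   Context: All graphs are finite and simple; $N(v)$ is the open neighbourhood. $\gamma_{(2,2,2)}(G)$ is the minimum of $\sum_v f(v)$ over functions $f:V(G)\to\{0,1,2\}$ with $\sum_{u\in N(v)}f(u)\ge2$ for every vertex $v$ (defined when $G$ has no isolated vertex). $\gamma_t(G)$ is the total domination number (minimum size of $S$ such that every vertex has a neighbour in $S$). $\gamma_{\times2,t}(G)$ is the minimum size of $S\subseteq V(G)$ such that every vertex has at least two neighbours in $S$ (defined when $G$ has minimum degree at least $2$). *)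

(* Defs.v *)
From mathcomp Require Import all_boot.
Set Implicit Arguments. Unset Strict Implicit. Unset Printing Implicit Defensive.

(* A finite simple graph: vertex type T : finType, adjacency e : rel T,
   assumed symmetric and irreflexive in the theorem. *)
Section Graph.
Variables (T : finType) (e : rel T).

Definition nbhd (v : T) : {set T} := [set u | e v u].
Definition deg (v : T) : nat := #|nbhd v|.
(* minimum degree delta(G) (for the empty graph this is 0) *)
Definition min_deg : nat := \big[minn/#|T|]_(v : T) deg v.
Definition no_isolated : Prop := forall v : T, exists u, e v u.

Definition weight (f : {ffun T -> 'I_3}) : nat := \sum_(v : T) (f v : nat).
Definition is_222_dom (f : {ffun T -> 'I_3}) : bool :=
  [forall v : T, 2 <= \sum_(u in nbhd v) (f u : nat)].
(* the constant-2 function is feasible when G has no isolated vertex,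
   so the default 2*|V| does not affect the minimum there *)
Definition gamma222 : nat :=
  \big[minn/(2 * #|T|)]_(f : {ffun T -> 'I_3} | is_222_dom f) weight f.

Definition is_tdom (S : {set T}) : bool := [forall v : T, #|nbhd v :&: S| >= 1].
Definition gamma_t : nat := \big[minn/#|T|]_(S : {set T} | is_tdom S) #|S|.

Definition is_dtdom (S : {set T}) : bool := [forall v : T, #|nbhd v :&: S| >= 2].
(* only meaningful when min_deg >= 2 (then V itself is feasible) *)
Definition gamma_x2t : nat := \big[minn/#|T|]_(S : {set T} | is_dtdom S) #|S|.

End Graph.

(* Main.v *)
Require Import Defs.
From mathcomp Require Import all_boot zify.
Set Implicit Arguments. Unset Strict Implicit. Unset Printing Implicit Defensive.

Lemma bigmin_le_seq (I : eqType) (r : seq I) (P : pred I) (F : I -> nat) d x :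
  x \in r -> P x -> \big[minn/d]_(i <- r | P i) F i <= F x.
Proof.
elim: r => [//|y r IH]; rewrite inE big_cons => /orP [/eqP <-|xr] Px.
  by rewrite Px geq_minl.
case: ifP => _; last exact: IH.
by rewrite geq_min IH // orbT.
Qed.

Lemma bigmin_le (I : finType) (P : pred I) (F : I -> nat) d x :
  P x -> \big[minn/d]_(i | P i) F i <= F x.
Proof. by move=> Px; apply: bigmin_le_seq => //; rewrite mem_index_enum. Qed.

Lemma bigmin_led (I : finType) (P : pred I) (F : I -> nat) d :
  \big[minn/d]_(i | P i) F i <= d.
Proof. by apply: (big_rec (fun m => m <= d)) => // i m _ H; rewrite geq_min H orbT. Qed.

Lemma bigmin_att (I : finType) (P : pred I) (F : I -> nat) d x0 :
  P x0 -> F x0 <= d -> exists2 x, P x & \big[minn/d]_(i | P i) F i = F x.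
Proof.
move=> P0 F0.
have : \big[minn/d]_(i | P i) F i = d \/ exists2 x, P x & \big[minn/d]_(i | P i) F i = F x.
  apply: (big_rec (fun m => m = d \/ exists2 x, P x & m = F x)); first by left.
  move=> i m Pi [->|[x Px ->]].
    case: (leqP (F i) d) => h; [right; exists i => //; lia | left; lia].
  case: (leqP (F i) (F x)) => h; right; [exists i => //| exists x => //]; lia.
case=> [E|//]; exists x0 => //.
have := @bigmin_le _ P F d x0 P0; rewrite E; lia.
Qed.

Definition mkf (T : finType) (c : nat) (S : {set T}) : {ffun T -> 'I_3} :=
  [ffun u => inord (if u \in S then c else 0)].
Arguments mkf {T}.

Lemma mkfE (T : finType) c (S : {set T}) u : c <= 2 ->
  (mkf c S u : nat) = if u \in S then c else 0.
Proof. by move=> hc; rewrite ffunE inordK //; case: ifP; lia. Qed.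

Lemma sum_mkf (T : finType) c (S A : {set T}) : c <= 2 ->
  \sum_(u in A) (mkf c S u : nat) = c * #|A :&: S|.
Proof.
move=> hc.
have -> : \sum_(u in A) (mkf c S u : nat) = \sum_(u in A :&: S) c.
  rewrite big_mkcond [RHS]big_mkcond; apply: eq_bigr => u _.
  by rewrite mkfE // in_setI; case: (u \in A); case: (u \in S).
by rewrite sum_nat_const mulnC.
Qed.

Lemma weight_mkf (T : finType) c (S : {set T}) : c <= 2 ->
  weight (mkf c S) = c * #|S|.
Proof.
move=> hc; rewrite /weight.
have := @sum_mkf T c S [set: T] hc; rewrite setTI => <-.
by apply: eq_bigl => u; rewrite in_setT.
Qed.

Lemma sum_out (T : finType) (f : {ffun T -> 'I_3}) (A : {set T}) a b :
  a \notin A -> b \notin A -> a != b ->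
  \sum_(u in A) (f u : nat) + f a + f b <= weight f.
Proof.
move=> aA bA ab; rewrite /weight [X in _ <= X](bigID (fun u => u \in A)) /= -addnA leq_add2l.
rewrite (bigD1 a) //= (bigD1 b) /=; last by rewrite bA eq_sym ab.
by rewrite addnA leq_addr.
Qed.

Lemma sum_out1 (T : finType) (f : {ffun T -> 'I_3}) (A : {set T}) a :
  a \notin A -> \sum_(u in A) (f u : nat) + f a <= weight f.
Proof.
move=> aA; rewrite /weight [X in _ <= X](bigID (fun u => u \in A)) /= leq_add2l.
by rewrite (bigD1 a) //= leq_addr.
Qed.

Lemma dtdom_ge3 (T : finType) (e : rel T) (irr : irreflexive e) (S : {set T}) (v : T) :
  is_dtdom e S -> 3 <= #|S|.
Proof.
move=> /forallP H.
have /card_gt0P [x]: 0 < #|nbhd e v :&: S| by have := H v; lia.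
rewrite in_setI => /andP [_ xS].
have : x |: (nbhd e x :&: S) \subset S.
  by apply/subsetP => y; rewrite in_setU1 in_setI => /orP [/eqP ->|/andP [_ ->]].
move/subset_leq_card; rewrite cardsU1 in_setI /nbhd inE irr /=.
have := H x; rewrite /nbhd; lia.
Qed.

Lemma tdom_ge2 (T : finType) (e : rel T) (irr : irreflexive e) (S : {set T}) (v : T) :
  is_tdom e S -> 2 <= #|S|.
Proof.
move=> /forallP H.
have /card_gt0P [x]: 0 < #|nbhd e v :&: S| by have := H v; lia.
rewrite in_setI => /andP [_ xS].
have /card_gt0P [y]: 0 < #|nbhd e x :&: S| by have := H x; lia.
rewrite in_setI /nbhd inE => /andP [xy yS].
have : [set x; y] \subset S.
  by apply/subsetP => z; rewrite in_set2 => /orP [/eqP ->|/eqP ->].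
move/subset_leq_card; rewrite cards2.
have -> : x != y by apply/eqP => exy; move: xy; rewrite exy irr.
by [].
Qed.

Lemma dom_two (T : finType) (e : rel T) (irr : irreflexive e) f a :
  is_222_dom e f -> (f a : nat) = 2 ->
  4 <= weight f /\ (weight f <= 4 -> exists2 S, is_tdom e S & #|S| <= 2).
Proof.
move=> /forallP D fa.
have Ha := D a.
have aN : a \notin nbhd e a by rewrite /nbhd inE irr.
split; first by have := sum_out1 f aN; lia.
move=> w4.
have [b bN fb]: exists2 b, b \in nbhd e a & 0 < f b.
  case: (boolP [exists b in nbhd e a, 0 < f b]) => [/exists_inP //|/exists_inPn H0].
  have : \sum_(u in nbhd e a) (f u : nat) = 0.
    by apply: big1 => u /H0; rewrite -leqNgt leqn0 => /eqP.
  lia.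
have ab : a != b by apply/eqP => ab; move: bN; rewrite -ab /nbhd inE irr.
exists [set a; b]; last by rewrite cards2; case: (a != b).
apply/forallP => v.
case: (boolP (e v a)) => va.
  by apply/card_gt0P; exists a; rewrite in_setI /nbhd inE va in_set2 eqxx.
case: (boolP (e v b)) => vb.
  by apply/card_gt0P; exists b; rewrite in_setI /nbhd inE vb in_set2 eqxx orbT.
have := @sum_out T f (nbhd e v) a b; rewrite /nbhd !inE va vb => /(_ isT isT ab).
have := D v; rewrite /nbhd; lia.
Qed.

Lemma dom_01 (T : finType) (e : rel T) f :
  is_222_dom e f -> (forall u, (f u : nat) <= 1) ->
  exists2 S, is_dtdom e S & #|S| = weight f.
Proof.
move=> /forallP D H.
set S := [set u | (f u : nat) != 0].
have Ef : f = mkf 1 S.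
  apply/ffunP => u; apply/val_inj; rewrite /= mkfE // inE.
  by move: (H u); case: (nat_of_ord (f u)) => [|[|]].
exists S; last by rewrite Ef weight_mkf // mul1n.
apply/forallP => v; have := D v; rewrite Ef sum_mkf //; lia.
Qed.

Lemma tdom_f (T : finType) (e : rel T) S : is_tdom e S -> is_222_dom e (mkf 2 S).
Proof. by move=> /forallP H; apply/forallP => v; rewrite sum_mkf //; have := H v; lia. Qed.

Lemma dtdom_f (T : finType) (e : rel T) S : is_dtdom e S -> is_222_dom e (mkf 1 S).
Proof. by move=> /forallP H; apply/forallP => v; rewrite sum_mkf //; have := H v; lia. Qed.

Theorem theorem18 (T : finType) (e : rel T)
  (e_sym : symmetric e) (e_irr : irreflexive e)
  (noiso : no_isolated e) :
  gamma222 e = 4 <->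
  [\/ (2 <= min_deg e /\ gamma_x2t e = 4),
      (gamma_t e = 2 /\ min_deg e = 1)
    | (gamma_t e = 2 /\ 2 <= min_deg e /\ 4 <= gamma_x2t e)].
Proof.
case: (pickP (@predT T)) => [v0 _|T0]; last first.
  have cT : #|T| = 0 by apply: eq_card0 T0.
  have h1 : gamma222 e <= 2 * #|T| by apply: bigmin_led.
  have h2 : gamma_t e <= #|T| by apply: bigmin_led.
  have h3 : min_deg e <= #|T| by apply: bigmin_led.
  by split => [|[[]|[]|[]]]; lia.
have setT_tdom : is_tdom e [set: T].
  apply/forallP => v; rewrite setIT; have [u evu] := noiso v.
  by apply/card_gt0P; exists u; rewrite inE.
have [g gD gE] : exists2 g, is_222_dom e g & gamma222 e = weight g.
  apply: (@bigmin_att _ _ _ _ (mkf 2 setT)); first exact: tdom_f.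
  by rewrite weight_mkf // cardsT.
have gmin : forall f, is_222_dom e f -> gamma222 e <= weight f.
  by move=> f H; apply: bigmin_le.
have [St StD StE] : exists2 S, is_tdom e S & gamma_t e = #|S|.
  by apply: (@bigmin_att _ _ _ _ setT) => //; rewrite cardsT.
have tmin : forall S, is_tdom e S -> gamma_t e <= #|S|.
  by move=> S H; apply: bigmin_le.
have [vm _ vmE] : exists2 v, predT v & min_deg e = deg e v.
  by apply: (@bigmin_att _ _ _ _ v0) => //; apply: max_card.
have mdmin : forall v, min_deg e <= deg e v.
  by move=> v; apply: bigmin_le.
have md1 : 1 <= min_deg e.
  rewrite vmE; have [u evu] := noiso vm.
  by apply/card_gt0P; exists u; rewrite inE.
have dt_md : forall S, is_dtdom e S -> 2 <= min_deg e.
  move=> S /forallP H; rewrite vmE; apply: leq_trans (H vm) _.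
  by apply: subset_leq_card; apply: subsetIl.
have md_dt : 2 <= min_deg e -> exists2 S, is_dtdom e S & gamma_x2t e = #|S|.
  move=> h; apply: (@bigmin_att _ _ _ _ setT); last by rewrite cardsT.
  by apply/forallP => v; rewrite setIT; apply: leq_trans h (mdmin v).
have xmin : forall S, is_dtdom e S -> gamma_x2t e <= #|S|.
  by move=> S H; apply: bigmin_le.
have low : forall f, is_222_dom e f -> weight f <= 3 ->
    exists2 S, is_dtdom e S & #|S| <= 3.
  move=> f fD w3.
  case: (boolP [exists a, (f a : nat) == 2]) => [/existsP [a /eqP fa]|/existsPn H].
    by have [] := dom_two e_irr fD fa; lia.
  have [S SD SE] := dom_01 fD (fun u => ltac:(move/eqP: (H u); have := ltn_ord (f u); lia)).
  by exists S => //; lia.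
have up : forall f, is_222_dom e f -> weight f <= 4 ->
    (exists2 S, is_tdom e S & #|S| <= 2) \/ (exists2 S, is_dtdom e S & #|S| <= 4).
  move=> f fD w4.
  case: (boolP [exists a, (f a : nat) == 2]) => [/existsP [a /eqP fa]|/existsPn H].
    by have [_ /(_ w4)] := dom_two e_irr fD fa; left.
  have [S SD SE] := dom_01 fD (fun u => ltac:(move/eqP: (H u); have := ltn_ord (f u); lia)).
  by right; exists S => //; lia.
have tge2 := tdom_ge2 e_irr v0 StD.
split.
- move=> G4.
  have noD : forall S, is_dtdom e S -> 4 <= #|S|.
    move=> S SD; rewrite leqNgt; apply/negP => s3.
    have := gmin _ (dtdom_f SD); rewrite weight_mkf // G4 mul1n; lia.
  have [[S SD S2]|[S SD S4]] := up g gD ltac:(by rewrite -gE G4).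
  + have gt2 : gamma_t e = 2 by have := tmin S SD; lia.
    case: (leqP 2 (min_deg e)) => h.
      have [Sx SxD SxE] := md_dt h.
      by apply: Or33; split => //; split => //; rewrite SxE; exact: noD.
    by apply: Or32; split => //; lia.
  + have h := dt_md S SD; have [Sx SxD SxE] := md_dt h.
    apply: Or31; split => //; have := xmin S SD; have := noD Sx SxD; lia.
- move=> H.
  have noD : forall S, is_dtdom e S -> 4 <= #|S|.
    move=> S SD; case: H => [[h x4]|[_ h]|[_ [_ h]]].
    * by have := xmin S SD; lia.
    * by have := dt_md S SD; lia.
    * by have := xmin S SD; lia.
  have G4up : gamma222 e <= 4.
    case: H => [[h x4]|[t2 _]|[t2 _]].
    * have [Sx SxD SxE] := md_dt h.
      by have := gmin _ (dtdom_f SxD); rewrite weight_mkf //; lia.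
    * by have := gmin _ (tdom_f StD); rewrite weight_mkf //; lia.
    * by have := gmin _ (tdom_f StD); rewrite weight_mkf //; lia.
  have G4lo : 4 <= gamma222 e.
    rewrite leqNgt; apply/negP => g3.
    have [S SD S3] := low g gD ltac:(by rewrite -gE; lia).
    by have := noD S SD; lia.
  lia.
Qed.
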